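(* Let $G$ be a torsion-free group, $\mathbb{F}$ a field, $\alpha$ a zero divisor in $\mathbb{F}[G]$ with $|supp(\alpha)|=4$ and $|S_\alpha|=10$, and $\beta$ a mate of $\alpha$. Let $B=supp(\alpha)$, $C=supp(\beta)$. If $s\in\Delta^i$ and $s'\in\Delta^j$ with $s\ne s'$ and $i,j\in\{3,4\}$, then $|\mathcal{V}(s)\cap\mathcal{V}(s')|\le2$.
   Context: $supp(\gamma)=\{x\in G:\gamma_x\ne0\}$; $S_\alpha=\{h^{-1}h':h\ne h',\ h,h'\in supp(\alpha)\}$. A mate of $\alpha$ is a non-zero $\beta$ with $\alpha\beta=0$ of minimal support size among all non-zero $\beta'$ with $\alpha\beta'=0$. $BC=\{bc:b\in B,c\in C\}$. For $s\in BC$, $R(s)=\{(b,c)\in B\times C:bc=s\}$, $r(s)=|R(s)|$; $\Delta^i=\{s\in BC:r(s)=i\}$; $\mathcal{V}(s)=\{g\in C:(sg^{-1},g)\in R(s)\}$. *)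

(* Defs.v *)
From HB Require Import structures.
From mathcomp Require Import all_boot all_order all_algebra.
From mathcomp Require Import finmap.
Set Implicit Arguments. Unset Strict Implicit. Unset Printing Implicit Defensive.
Import GRing.Theory.
Local Open Scope fset_scope.

Definition grpalg (G : groupType) (F : fieldType) := {fsfun G -> F with 0%R}.

Definition supp (G : groupType) (F : fieldType) (a : grpalg G F) : {fset G} := finsupp a.

Definition gmul (G : groupType) (F : fieldType) (a b : grpalg G F) (x : G) : F :=
  (\sum_(h <- supp a) a h * b (h^-1 * x)%g)%R.

Definition torsion_free (G : groupType) : Prop :=
  forall (g : G) (n : nat), (0 < n)%N -> (g ^+ n)%g = 1%g -> g = 1%g.

Definition nonzero (G : groupType) (F : fieldType) (a : grpalg G F) : Prop :=
  exists x : G, a x != 0%R.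

Definition annihilates (G : groupType) (F : fieldType) (a b : grpalg G F) : Prop :=
  forall x : G, gmul a b x = 0%R.

Definition zero_divisor (G : groupType) (F : fieldType) (a : grpalg G F) : Prop :=
  nonzero a /\ exists b : grpalg G F, nonzero b /\ annihilates a b.

Definition is_mate (G : groupType) (F : fieldType) (a b : grpalg G F) : Prop :=
  [/\ nonzero b, annihilates a b &
     forall b' : grpalg G F, nonzero b' -> annihilates a b' ->
       (#|` supp b| <= #|` supp b'|)%N].

Definition S_of (G : groupType) (F : fieldType) (a : grpalg G F) : {fset G} :=
  [fset (h^-1 * h')%g | h in supp a, h' in supp a & h != h'].

Definition prodset (G : groupType) (B C : {fset G}) : {fset G} :=
  [fset (b * c)%g | b in B, c in C].

Definition Rset (G : groupType) (B C : {fset G}) (s : G) : {fset G * G} :=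
  [fset p in B `*` C | (p.1 * p.2)%g == s].

Definition rcount (G : groupType) (B C : {fset G}) (s : G) : nat := #|` Rset B C s|.

Definition Delta (G : groupType) (B C : {fset G}) (i : nat) : {fset G} :=
  [fset s in prodset B C | rcount B C s == i].

Definition Vset (G : groupType) (B C : {fset G}) (s : G) : {fset G} :=
  [fset g in C | (s * g^-1, g)%g \in Rset B C s].

(* Main.v *)
Require Import Defs.
From HB Require Import structures.
From mathcomp Require Import all_boot all_order all_algebra.
From mathcomp Require Import finmap.
Local Open Scope fset_scope.

Lemma cardU1_le {K : choiceType} (x : K) (A : {fset K}) : (#|` x |` A| <= (#|` A|).+1)%N.
Proof. by rewrite cardfsU1 -addn1 addnC leq_add2l leq_b1. Qed.

Lemma cardU1_ler {K : choiceType} (x : K) (A : {fset K}) : (#|` A `|` [fset x]| <= (#|` A|).+1)%N.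
Proof. by rewrite fsetUC cardU1_le. Qed.

Lemma cardU1_lerS {K : choiceType} (x : K) (A : {fset K}) n : (#|` A| <= n)%N -> (#|` A `|` [fset x]| <= n.+1)%N.
Proof. by move=> h; rewrite (leq_trans (cardU1_ler x A)) // ltnS. Qed.
Lemma cardU1_leS {K : choiceType} (x : K) (A : {fset K}) n : (#|` A| <= n)%N -> (#|` x |` A| <= n.+1)%N.
Proof. by move=> h; rewrite (leq_trans (cardU1_le x A)) // ltnS. Qed.

Section K.
Variables (G : groupType) (F : fieldType) (alpha : grpalg G F).
Let B := supp alpha.

Lemma S_mem x : x \in S_of alpha -> exists h h', [/\ h \in B, h' \in B, h != h' & x = (h^-1 * h')%g].
Proof.
move=> /imfset2P [h hB [h' h'P ->]]; rewrite !inE /= in h'P.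
case/andP: h'P => h'B hh'.
by exists h, h'.
Qed.

Lemma V_mem (C : {fset G}) s g : g \in Vset B C s -> (s * g^-1)%g \in B.
Proof. by rewrite /Vset /Rset !inE /= => /and3P[_ /andP[]]. Qed.

Lemma path_le6 {t a b c d : G} : (t * a = b)%g -> (t * b = c)%g -> (t * c = d)%g ->
  (forall h, h \in B -> [\/ h = a, h = b, h = c | h = d]) -> (#|` S_of alpha| <= 6)%N.
Proof.
move=> Hb Hc Hd HB; subst b c d.
set E := [fset (a^-1 * t * a)%g; (a^-1 * t * t * a)%g; (a^-1 * t * t * t * a)%g;
   (a^-1 * t^-1 * a)%g; (a^-1 * t^-1 * t^-1 * a)%g; (a^-1 * t^-1 * t^-1 * t^-1 * a)%g].
have sub : S_of alpha `<=` E.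
  apply/fsubsetP => x /S_mem [h [h' [/HB hB /HB h'B hh' ->]]].
  case: hB => -> in hh' *; case: h'B => -> in hh' *; rewrite ?eqxx // in hh';
  rewrite ?invgM ?mulgA ?mulgVK ?mulgK /E !inE; by rewrite eqxx ?orbT.
apply: leq_trans (fsubset_leq_card sub) _.
rewrite /E.
do 4 apply: cardU1_lerS.
by apply: cardU1_leS; rewrite cardfs1.
Qed.

Variable tf : torsion_free G.

Lemma tf_fix {t a : G} : t != 1%g -> (t * a = a)%g -> False.
Proof. by move=> /eqP nt e; apply: nt; apply: (mulIg a); rewrite mul1g. Qed.

Lemma tf_inj {t a b c : G} : (t * a = c)%g -> (t * b = c)%g -> a != b -> False.
Proof. by move=> ea eb /eqP; apply; apply: (mulgI t); rewrite ea eb. Qed.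

Lemma cyc2 {t a b : G} : t != 1%g -> (t * a = b)%g -> (t * b = a)%g -> False.
Proof.
move=> /eqP nt ea eb; apply: nt; apply: (tf _ 2) => //.
by rewrite expg2; apply: (mulIg a); rewrite -mulgA ea eb mul1g.
Qed.

Lemma cyc3 {t a b c : G} : t != 1%g -> (t * a = b)%g -> (t * b = c)%g -> (t * c = a)%g -> False.
Proof.
move=> /eqP nt ea eb ec; apply: nt; apply: (tf _ 3) => //.
by rewrite expgS expg2; apply: (mulIg a); rewrite -!mulgA ea eb ec mul1g.
Qed.

Lemma key (t b1 b2 b3 : G) : t != 1%g -> b1 != b2 -> b1 != b3 -> b2 != b3 ->
  b1 \in B -> b2 \in B -> b3 \in B ->
  (t * b1)%g \in B -> (t * b2)%g \in B -> (t * b3)%g \in B ->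
  #|` B| = 4 -> (#|` S_of alpha| <= 6)%N.
Proof.
move=> nt n12 n13 n23 b1B b2B b3B m1 m2 m3 c4.
set X := [fset b1; b2; b3].
have XB : X `<=` B.
  by apply/fsubsetP => h; rewrite !inE => /orP[/orP[]|] /eqP->.
have cX : #|` X| = 3.
  have n31 : b3 != b1 by rewrite eq_sym.
  have n32 : b3 != b2 by rewrite eq_sym.
  by rewrite /X fsetUC cardfsU1 cardfsU1 cardfs1 !inE negb_or n31 n32 n12.
have : #|` B `\` X| == 1 by rewrite cardfsDS // c4 cX.
case/cardfs1P => b4 eb4.
have HB : forall h, h \in B -> [\/ h = b1, h = b2, h = b3 | h = b4].
  move=> h hB; case: (boolP (h \in X)).
    by rewrite !inE => /orP[/orP[]|] /eqP->; [apply: Or41|apply: Or42|apply: Or43].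
  move=> hX; have : h \in B `\` X by rewrite inE hX hB.
  by rewrite eb4 inE => /eqP ->; apply: Or44.
have cov : forall a b c d, (forall h, h \in [fset b1; b2; b3; b4] -> [\/ h = a, h = b, h = c | h = d]) ->
   forall h, h \in B -> [\/ h = a, h = b, h = c | h = d].
  move=> a b c d Hc h /HB hB; apply: Hc.
  by case: hB => ->; rewrite !inE eqxx ?orbT.
case: (HB _ m1) => H1; case: (HB _ m2) => H2; case: (HB _ m3) => H3;
first [ exfalso; first
  [ exact: (tf_fix nt H1) | exact: (tf_fix nt H2) | exact: (tf_fix nt H3)
  | exact: (tf_inj H1 H2 n12) | exact: (tf_inj H1 H3 n13) | exact: (tf_inj H2 H3 n23)
  | exact: (cyc2 nt H1 H2) | exact: (cyc2 nt H1 H3) | exact: (cyc2 nt H2 H3)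
  | exact: (cyc2 nt H2 H1) | exact: (cyc2 nt H3 H1) | exact: (cyc2 nt H3 H2)
  | exact: (cyc3 nt H1 H2 H3) | exact: (cyc3 nt H1 H3 H2) | exact: (cyc3 nt H2 H1 H3)
  | exact: (cyc3 nt H2 H3 H1) | exact: (cyc3 nt H3 H1 H2) | exact: (cyc3 nt H3 H2 H1) ]
| first
  [ apply: (path_le6 H1 H2 H3) | apply: (path_le6 H1 H3 H2) | apply: (path_le6 H2 H1 H3)
  | apply: (path_le6 H2 H3 H1) | apply: (path_le6 H3 H1 H2) | apply: (path_le6 H3 H2 H1) ];
  apply: cov => h; rewrite !inE => /orP[/orP[/orP[]|]|] /eqP ->;
  by [apply: Or41|apply: Or42|apply: Or43|apply: Or44] ].
Qed.
End K.

Lemma three {K : choiceType} (A : {fset K}) : (2 < #|` A|)%N ->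
  exists x y z, [/\ x \in A, y \in A, z \in A & [/\ x != y, x != z & y != z]].
Proof.
move=> h.
have : A != fset0 by rewrite -cardfs_gt0 (ltn_trans _ h).
case/fset0Pn => x xA.
have h1 := cardfsD1 x A; rewrite h1 xA /= add1n ltnS in h.
have : A `\ x != fset0 by rewrite -cardfs_gt0 (ltn_trans _ h).
case/fset0Pn => y; rewrite inE => /andP[yx yA].
have h2 := cardfsD1 y (A `\ x); rewrite inE yx yA /= add1n in h2; rewrite h2 ltnS in h.
have : A `\ x `\ y != fset0 by rewrite -cardfs_gt0.
case/fset0Pn => z; rewrite !inE => /andP[zy /andP[zx zA]].
move: yx zy zx zA; rewrite !inE => yx zy zx zA.
by exists x, y, z; split => //; split; rewrite // eq_sym.
Qed.

Theorem mainTheorem18 (G : groupType) (F : fieldType) (alpha beta : grpalg G F)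
    (s s' : G) (i j : nat) :
  torsion_free G ->
  zero_divisor alpha ->
  #|` supp alpha| = 4%N ->
  #|` S_of alpha| = 10%N ->
  is_mate alpha beta ->
  s \in Delta (supp alpha) (supp beta) i ->
  s' \in Delta (supp alpha) (supp beta) j ->
  s != s' ->
  i \in [:: 3%N; 4%N] ->
  j \in [:: 3%N; 4%N] ->
  (#|` Vset (supp alpha) (supp beta) s `&` Vset (supp alpha) (supp beta) s'| <= 2)%N.
Proof.
move=> tf _ h4 h10 _ _ _ nss _ _.
rewrite leqNgt; apply/negP => /three [g1 [g2 [g3 [m1 m2 m3 [n12 n13 n23]]]]].
move: m1 m2 m3; rewrite !in_fsetI => /andP[v1 v1'] /andP[v2 v2'] /andP[v3 v3'].
set t := (s' * s^-1)%g.
have tb : forall g, (t * (s * g^-1) = s' * g^-1)%g.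
  by move=> g; rewrite /t -mulgA mulKg.
have nb : forall g g', g != g' -> (s * g^-1 != s * g'^-1)%g.
  move=> g g' ngg; apply/eqP => e; move/eqP: ngg; apply.
  by apply: invg_inj; apply: (mulgI s).
have nt : t != 1%g.
  apply/eqP => e; move/eqP: nss; apply.
  by move/(congr1 (fun x => x * s)%g): e; rewrite /t mulgVK mul1g.
have VM := @V_mem G F alpha (supp beta).
have := @key G F alpha tf t _ _ _ nt (nb _ _ n12) (nb _ _ n13) (nb _ _ n23)
  (VM _ _ v1) (VM _ _ v2) (VM _ _ v3).
rewrite !tb => /(_ (VM _ _ v1') (VM _ _ v2') (VM _ _ v3') h4).
by rewrite h10.
Qed.
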